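(* Let $p\ge 2$ and let $(E_n)$ be a sequence of convex and compact subsets of $\mathbb{R}^p$. Assume that $F_n:=\partial E_n$ converges in the Painlevé–Kuratowski sense to a compact nonempty set $F$. Then $E_n$ converges in the Painlevé–Kuratowski sense to $E:=\mathrm{conv}\,F$, and $\partial E=F$.
   Context: For subsets $A_n$ of $\mathbb{R}^p$, $\liminf A_n$ is the set of limits of sequences $x_n\in A_n$, $\limsup A_n$ is the set of limits of sequences $x_{n_k}\in A_{n_k}$ along some $n_1<n_2<\dots$, and $A_n\to A$ in the Painlevé–Kuratowski sense if $\liminf A_n=\limsup A_n=A$. $\partial$ denotes the topological boundary in $\mathbb{R}^p$ and $\mathrm{conv}$ the convex hull. *)

(* Defs.v *)
From HB Require Import structures.
From mathcomp Require Import all_boot all_order all_algebra.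
From mathcomp Require Import all_classical all_reals all_analysis.
Set Implicit Arguments. Unset Strict Implicit. Unset Printing Implicit Defensive.
Import Order.TTheory GRing.Theory Num.Theory.
Import numFieldNormedType.Exports.
Local Open Scope classical_set_scope.
Local Open Scope ring_scope.


Definition is_convex (R : realType) (p : nat) (A : set 'rV[R]_p) : Prop :=
  forall x y (t : R), A x -> A y -> 0 <= t -> t <= 1 ->
    A (t *: x + (1 - t) *: y).

Definition conv_hull (R : realType) (p : nat) (A : set 'rV[R]_p) : set 'rV[R]_p :=
  [set x | forall C : set 'rV[R]_p, is_convex C -> A `<=` C -> C x].

Definition boundary (R : realType) (p : nat) (A : set 'rV[R]_p) : set 'rV[R]_p :=
  closure A `\` interior A.

Definition PK_liminf (R : realType) (p : nat) (A : nat -> set 'rV[R]_p)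
  : set 'rV[R]_p :=
  [set x | exists u : nat -> 'rV[R]_p,
     (forall n, A n (u n)) /\ (u @ \oo --> x)].

Definition PK_limsup (R : realType) (p : nat) (A : nat -> set 'rV[R]_p)
  : set 'rV[R]_p :=
  [set x | exists (phi : nat -> nat) (u : nat -> 'rV[R]_p),
     (forall k, (phi k < phi k.+1)%N) /\
     (forall k, A (phi k) (u k)) /\ (u @ \oo --> x)].

Definition PK_converges (R : realType) (p : nat) (A : nat -> set 'rV[R]_p)
  (L : set 'rV[R]_p) : Prop :=
  PK_liminf A = L /\ PK_limsup A = L.

(* Main.v *)
Require Import Defs.
From HB Require Import structures.
From mathcomp Require Import all_boot all_order all_algebra.
From mathcomp Require Import all_classical all_reals all_analysis.
From mathcomp Require Import ring lra.
Import Order.TTheory GRing.Theory Num.Theory.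
Import numFieldNormedType.Exports.
Local Open Scope classical_set_scope.
Local Open Scope ring_scope.
Set Implicit Arguments. Unset Strict Implicit. Unset Printing Implicit Defensive.

Lemma entry_le_norm {R : realType} {p : nat} (x : 'rV[R]_p) i : `|x ord0 i| <= `|x|.
Proof.
rewrite [leRHS]/Num.Def.normr /= mx_normrE; apply/bigmax_geP; right; exists (ord0, i) => //.
Qed.

Lemma norm_le_entries {R : realType} {p : nat} (x : 'rV[R]_p) (c : R) :
  0 <= c -> (forall i, `|x ord0 i| <= c) -> `|x| <= c.
Proof.
move=> c0 H; rewrite [leLHS]/Num.Def.normr /= mx_normrE; apply: bigmax_le => //= -[a b] _.
by rewrite (ord1 a).
Qed.

Lemma norm_attained {R : realType} {p : nat} (x : 'rV[R]_p) :
  x != 0 -> exists i, `|x| = `|x ord0 i|.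
Proof.
move=> x0; have : mx_norm x != 0 by rewrite -[mx_norm x]/(`|x|) normr_eq0.
move=> /mx_norm_neq0 [[a b] H]; exists b; rewrite (ord1 a) in H; exact: H.
Qed.


Definition dot {R : realType} {p : nat} (u v : 'rV[R]_p) : R := \sum_i u ord0 i * v ord0 i.
Definition l1 {R : realType} {p : nat} (u : 'rV[R]_p) : R := \sum_i `|u ord0 i|.
Definition sgnv {R : realType} {p : nat} (u : 'rV[R]_p) : 'rV[R]_p :=
  \row_i (if 0 <= u ord0 i then 1 else -1).

Lemma dotDr {R : realType} {p : nat} (d u v : 'rV[R]_p) : dot d (u + v) = dot d u + dot d v.
Proof. rewrite /dot -big_split /=; apply: eq_bigr => i _; by rewrite mxE mulrDr. Qed.

Lemma dotZr {R : realType} {p : nat} (d u : 'rV[R]_p) a : dot d (a *: u) = a * dot d u.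
Proof. rewrite /dot mulr_sumr; apply: eq_bigr => i _; by rewrite mxE mulrCA. Qed.

Lemma dotNr {R : realType} {p : nat} (d u : 'rV[R]_p) : dot d (- u) = - dot d u.
Proof. rewrite /dot -sumrN; apply: eq_bigr => i _; by rewrite mxE mulrN. Qed.

Lemma dotBr {R : realType} {p : nat} (d u v : 'rV[R]_p) : dot d (u - v) = dot d u - dot d v.
Proof. by rewrite dotDr dotNr. Qed.

Lemma dot_sgnv {R : realType} {p : nat} (d : 'rV[R]_p) : dot d (sgnv d) = l1 d.
Proof.
rewrite /dot /l1; apply: eq_bigr => i _; rewrite mxE.
case: ifP => h; first by rewrite mulr1 ger0_norm.
by rewrite mulrN1 ltr0_norm // ltNge h.
Qed.

Lemma dot_le {R : realType} {p : nat} (d u : 'rV[R]_p) : dot d u <= l1 d * `|u|.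
Proof.
rewrite /dot /l1 mulr_suml; apply: ler_sum => i _.
apply: le_trans (ler_norm _) _; rewrite normrM; apply: ler_wpM2l => //.
exact: entry_le_norm.
Qed.

Lemma entry_le_l1 {R : realType} {p : nat} (d : 'rV[R]_p) i : `|d ord0 i| <= l1 d.
Proof.
rewrite /l1 (bigD1 i) //= lerDl; apply: sumr_ge0 => j _; exact: normr_ge0.
Qed.

Lemma l1_gt0 {R : realType} {p : nat} (d : 'rV[R]_p) : d != 0 -> 0 < l1 d.
Proof.
move=> d0; have [i Hi] := norm_attained d0.
apply: lt_le_trans (entry_le_l1 d i); rewrite -Hi normr_gt0 //.
Qed.

Lemma norm_sgnv {R : realType} {p : nat} (d : 'rV[R]_p) : `|sgnv d| <= 1.
Proof.
apply: norm_le_entries => // i; rewrite mxE; case: ifP => _; by rewrite ?normrN normr1.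
Qed.

Lemma dot_self_entry {R : realType} {p : nat} (d : 'rV[R]_p) i : d ord0 i ^+ 2 <= dot d d.
Proof.
rewrite /dot (bigD1 i) //= -expr2 lerDl; apply: sumr_ge0 => j _; rewrite -expr2; exact: sqr_ge0.
Qed.

Lemma dot_self_le {R : realType} {p : nat} (d : 'rV[R]_p) : dot d d <= p%:R * `|d| ^+ 2.
Proof.
rewrite /dot; apply: le_trans (_ : \sum_(i < p) `|d| ^+ 2 <= _).
  apply: ler_sum => i _; rewrite -expr2 -real_normK ?num_real //.
  by rewrite lerXn2r ?nnegrE ?normr_ge0 ?entry_le_norm.
by rewrite sumr_const card_ord mulr_natl.
Qed.

Lemma dot_expand {R : realType} {p : nat} (d h : 'rV[R]_p) t :
  dot (d - t *: h) (d - t *: h) = dot d d - 2 * t * dot d h + t ^+ 2 * dot h h.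
Proof.
rewrite /dot mulr_sumr [t ^+ 2 * _]mulr_sumr -sumrB -big_split /=.
by apply: eq_bigr => i _; rewrite !mxE; ring.
Qed.

Lemma dot_continuous {R : realType} {p : nat} (w : 'rV[R]_p) :
  continuous (fun z : 'rV[R]_p => dot (w - z) (w - z)).
Proof.
rewrite /dot; apply: continuous_big => //; first exact: add_continuous.
move=> i _ z.
have -> : (fun z : 'rV[R]_p => (w - z) ord0 i * (w - z) ord0 i) =
    (fun z => (w ord0 i - z ord0 i) * (w ord0 i - z ord0 i)).
  by apply: funext => y; rewrite !mxE.
have c : (fun z : 'rV[R]_p => w ord0 i - z ord0 i) @ z --> w ord0 i - z ord0 i.
  exact: (cvgB (cvg_cst _) (@coord_continuous R 1 p ord0 i z)).
exact: (cvgM c c).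
Qed.

Lemma dot_self_ge0 {R : realType} {p : nat} (d : 'rV[R]_p) : 0 <= dot d d.
Proof. apply: sumr_ge0 => i _; rewrite -expr2; exact: sqr_ge0. Qed.

Lemma separation {R : realType} {p : nat} (K : set 'rV[R]_p) w y' (del : R) :
  is_convex K -> compact K -> K y' -> ~ K w -> `|w - y'| < del ->
  exists q d, [/\ K q, d != 0, (forall z, K z -> dot d (z - q) <= 0) &
     `|q - y'| < p.+1%:R * del].
Proof.
move=> cvK cK Ky nKw wy.
have del0 : 0 < del by apply: le_lt_trans wy.
have cf : {within K, continuous (fun z => dot (w - z) (w - z))}.
  by apply: continuous_subspaceT => x; exact: dot_continuous.
have [q /set_mem Kq qmin] := compact_EVT_min (ex_intro _ y' Ky) cK cf.
have {}qmin : forall t, K t -> dot (w - q) (w - q) <= dot (w - t) (w - t).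
  by move=> t Kt; apply: qmin; exact: mem_set.
exists q, (w - q); split => //.
- by rewrite subr_eq0; apply/negP => /eqP wq; apply: nKw; rewrite wq.
- move=> z Kz; rewrite leNgt; apply/negP => a0.
  set a := dot (w - q) (z - q) in a0.
  set b := dot (z - q) (z - q).
  have b0 : 0 <= b by exact: dot_self_ge0.
  set t := a / (b + a).
  have s0 : 0 < b + a by rewrite ltr_wpDl.
  have t0 : 0 < t by rewrite divr_gt0.
  have t1 : t <= 1 by rewrite ler_pdivrMr // mul1r lerDr.
  have Kzt : K (t *: z + (1 - t) *: q) by apply: cvK => //; exact: ltW.
  have := qmin _ Kzt.
  have -> : w - (t *: z + (1 - t) *: q) = (w - q) - t *: (z - q).
    by apply/matrixP => i j; rewrite !mxE; ring.
  rewrite dot_expand -/a -/b.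
  have tb : t * b <= a.
    by rewrite /t mulrAC ler_pdivrMr // ler_pM2l // lerDl ltW.
  suff : 0 < 2 * t * a - t ^+ 2 * b by rewrite -subr_gt0; lra.
  have -> : 2 * t * a - t ^+ 2 * b = t * (2 * a - t * b) by ring.
  by apply: mulr_gt0 => //; lra.
- have dq : `|q - w| <= p%:R * del.
    apply: norm_le_entries => [|i]; first by rewrite mulr_ge0 // ltW.
    have p1 : (1 <= p)%N by apply: leq_trans (ltn_ord i).
    rewrite -ler_sqr; last 2 first.
      by rewrite nnegrE.
      by rewrite nnegrE mulr_ge0 // ltW.
    rewrite real_normK ?num_real //.
    have -> : (q - w) ord0 i ^+ 2 = (w - q) ord0 i ^+ 2 by rewrite !mxE; ring.
    apply: le_trans (dot_self_entry _ i) _.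
    apply: le_trans (qmin _ Ky) _.
    apply: le_trans (dot_self_le _) _.
    rewrite exprMn; apply: ler_pM.
    + by rewrite ler0n.
    + by rewrite exprn_ge0.
    + by rewrite expr2 ler_peMr ?ler0n // ler1n.
    + by rewrite lerXn2r ?nnegrE ?normr_ge0 ?ltW.
  have -> : q - y' = (q - w) + (w - y') by rewrite addrA subrK.
  apply: le_lt_trans (ler_normD _ _) _.
  rewrite -natr1 mulrDl mul1r; exact: ler_ltD.
Qed.

Lemma ballN {R : realType} {p : nat} (x y : 'rV[R]_p) e : ball x e y <-> `|x - y| < e.
Proof. by rewrite -ball_normE. Qed.

Lemma interiorE {R : realType} {p : nat} (K : set 'rV[R]_p) x :
  interior K x <-> exists2 e, 0 < e & forall y, `|x - y| < e -> K y.
Proof.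
rewrite /interior /= nbhs_ballP; split.
  by move=> [e e0 H]; exists e => // y /ballN; apply: H.
by move=> [e e0 H]; exists e => // y /ballN; apply: H.
Qed.

Lemma closureE' {R : realType} {p : nat} (K : set 'rV[R]_p) x :
  (forall e, 0 < e -> exists2 y, K y & `|x - y| < e) -> closure K x.
Proof.
move=> H B /nbhs_ballP [e e0 eB]; have [y Ky xy] := H e e0.
by exists y; split => //; apply: eB; apply/ballN.
Qed.

Lemma closure_ballN {R : realType} {p : nat} (K : set 'rV[R]_p) x :
  closure K x -> forall e, 0 < e -> exists2 y, K y & `|x - y| < e.
Proof.
move=> H e e0; have [y [Ky /ballN xy]] := H (ball x e) (nbhsx_ballx x e e0).
by exists y.
Qed.

Lemma frac_lt {R : realType} (e y : R) : 0 < e -> 0 <= y -> e / (y + 1) * y < e.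
Proof.
move=> e0 y0; rewrite mulrAC ltr_pdivrMr ?ltr_wpDl // ltr_pM2l // ltrDl //.
Qed.

Lemma segP {R : realType} {p : nat} (a b : 'rV[R]_p) t s :
  (a + t *: (b - a)) - (a + s *: (b - a)) = (t - s) *: (b - a).
Proof. by apply/matrixP => i j; rewrite !mxE; ring. Qed.

Lemma segment_boundary {R : realType} {p : nat} (K : set 'rV[R]_p) a b :
  closed K -> K a -> ~ K b ->
  exists t, [/\ 0 <= t, t <= 1, K (a + t *: (b - a)) & ~ interior K (a + t *: (b - a))].
Proof.
move=> cK Ka nKb.
pose P t := a + t *: (b - a).
pose T := [set t : R | (0 <= t /\ t <= 1) /\ K (P t)].
have T0 : T 0 by split; [split => // | rewrite /P scale0r addr0].
have hT : has_sup T.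
  by split; [exists 0 | exists 1 => t [[_ ?] _]].
set s := sup T.
have s0 : 0 <= s by exact: sup_upper_bound.
have s1 : s <= 1 by apply: ge_sup; [exists 0 | move=> t [[_ ?] _]].
have nb0 : 0 < `|b - a| + 1 by rewrite ltr_wpDl.
have KPs : K (P s).
  apply: cK; apply: closureE' => e e0.
  have c0 : 0 < e / (`|b - a| + 1) by rewrite divr_gt0.
  have [t [[t0 t1] KPt] st] := sup_adherent c0 hT.
  exists (P t) => //.
  have ts : t <= s by exact: sup_upper_bound.
  rewrite /P segP normrZ.
  apply: le_lt_trans (_ : e / (`|b - a| + 1) * `|b - a| < e).
    by apply: ler_wpM2r => //; rewrite ger0_norm ?subr_ge0 // -/s in st *; lra.
  exact: frac_lt.
exists s; split => // /interiorE [e e0 He].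
have c0 : 0 < e / (`|b - a| + 1) by rewrite divr_gt0.
set c := e / (`|b - a| + 1) in c0.
have ce : c * `|b - a| < e.
  exact: frac_lt.
have s1' : s < 1.
  rewrite lt_neqAle s1 andbT; apply/negP => /eqP es.
  by apply: nKb; move: KPs; rewrite /P es scale1r addrC subrK.
have [t' [st' t'1 ht']] : exists t', [/\ s < t', t' <= 1 & (t' - s) * `|b - a| < e].
  case: (lerP (1 - s) (c / 2)) => h.
    exists 1; split => //.
    apply: le_lt_trans ce; apply: ler_wpM2r => //; lra.
  exists (s + c / 2); split; [lra | lra |].
  apply: le_lt_trans ce; apply: ler_wpM2r => //; lra.
have : T t'.
  split; first by split => //; lra.
  apply: He; rewrite distrC /P segP normrZ ger0_norm; [exact: ht' | lra].
move=> /(sup_upper_bound hT); rewrite -/s; lra.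
Qed.

Definition clust {R : realType} {p : nat} (A : nat -> set 'rV[R]_p) (x : 'rV[R]_p) :=
  forall e, 0 < e -> forall N, exists n, (N <= n)%N /\ exists2 y, A n y & `|x - y| < e.

Fixpoint build {T : Type} (g : nat * nat -> nat * T) (k : nat) : nat * T :=
  match k with 0 => g (0%N, 0%N) | k'.+1 => g (k'.+1, (build g k').1.+1) end.

Lemma incr_ge (phi : nat -> nat) : (forall k, (phi k < phi k.+1)%N) -> forall k, (k <= phi k)%N.
Proof.
move=> H; elim=> [|k IH] //; apply: leq_ltn_trans IH _; exact: H.
Qed.

Lemma eventuallyP (P : nat -> Prop) : (\forall n \near \oo, P n) -> exists N, forall n, (N <= n)%N -> P n.
Proof. by move=> [N _ HN]; exists N => n Nn; apply: HN. Qed.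

Lemma limsupE {R : realType} {p : nat} (A : nat -> set 'rV[R]_p) x :
  PK_limsup A x <-> clust A x.
Proof.
split.
  move=> [phi [u [phiI [Au /cvgrPdist_lt ux]]]] e e0 N.
  have [N0 HN0] := eventuallyP (ux e e0).
  exists (phi (maxn N0 N)); split.
    by apply: leq_trans (incr_ge phiI _); rewrite leq_maxr.
  by exists (u (maxn N0 N)) => //; apply: HN0; rewrite leq_maxl.
move=> H.
have H' : forall kN : nat * nat, exists ny : nat * 'rV[R]_p,
    [/\ (kN.2 <= ny.1)%N, A ny.1 ny.2 & `|x - ny.2| < (kN.1.+1%:R)^-1].
  move=> [k N]; have hk : 0 < (k.+1%:R : R)^-1 by rewrite invr_gt0.
  have [n [Nn [y Ay xy]]] := H _ hk N.
  by exists (n, y).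
have [g Hg] := choice H'.
pose f := build g.
have Hf : forall k, [/\ A (f k).1 (f k).2 & `|x - (f k).2| < (k.+1%:R)^-1].
  case=> [|k]; [have [_ ? ?] := Hg (0%N, 0%N) | have [_ ? ?] := Hg (k.+1, (f k).1.+1)]; by split.
exists (fun k => (f k).1), (fun k => (f k).2); split; [|split].
- by move=> k; have [] := Hg (k.+1, (f k).1.+1).
- by move=> k; have [] := Hf k.
- apply/cvgrPdist_lt => e e0.
  have := near_infty_natSinv_lt (PosNum e0).
  apply: filterS => n /= Hn; have [_ Hn'] := Hf n.
  exact: lt_trans Hn' Hn.
Qed.

Lemma compact_limsup {R : realType} {p : nat} (A : nat -> set 'rV[R]_p) (C : set 'rV[R]_p) :
  compact C ->
  (forall e, 0 < e -> forall N, exists n, (N <= n)%N /\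
     exists c, C c /\ exists2 y, A n y & `|c - y| < e) ->
  exists c, C c /\ PK_limsup A c.
Proof.
move=> cC H.
pose B (eN : R * nat) := [set c | C c /\ exists n, (eN.2 <= n)%N /\
     exists2 y, A n y & `|c - y| < eN.1].
pose D := [set eN : R * nat | 0 < eN.1].
have FF : Filter (filter_from D B).
  apply: filter_from_filter; first by exists (1, 0%N); rewrite /D /=.
  move=> [e1 N1] [e2 N2] /= e10 e20; exists (Num.min e1 e2, maxn N1 N2).
    by rewrite /D /= lt_min e10 e20.
  move=> c [Cc [n [Nn [y Ay cy]]]]; move: Nn cy; rewrite /= geq_max lt_min.
  move=> /andP [N1n N2n] /andP [cy1 cy2].
  by split; split => //; exists n; split => //; exists y.
have PF : ProperFilter (filter_from D B).
  apply: filter_from_proper => -[e N] /= e0.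
  have [n [Nn [c [Cc [y Ay cy]]]]] := H e e0 N.
  by exists c; split => //; exists n; split => //; exists y.
have FC : filter_from D B C by exists (1, 0%N); [rewrite /D /= | move=> c []].
have [c [Cc clc]] := cC _ PF FC.
exists c; split => //; apply/limsupE => e e0 N.
have e20 : 0 < e / 2 by rewrite divr_gt0.
have := clc (B (e / 2, N)) (ball c (e / 2)).
case; [by exists (e / 2, N) | exact: nbhsx_ballx |].
move=> c' [[_ [n [Nn [y Ay cy]]]] /ballN cc'].
exists n; split => //; exists y => //.
have -> : c - y = (c - c') + (c' - y) by rewrite addrA subrK.
apply: le_lt_trans (ler_normD _ _) _.
rewrite /= in cy; lra.
Qed.

Lemma liminf_sub {R : realType} {p : nat} (A B : nat -> set 'rV[R]_p) :
  (forall n, A n `<=` B n) -> PK_liminf A `<=` PK_liminf B.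
Proof. by move=> AB x [u [Au ux]]; exists u; split => // n; apply: AB. Qed.

Lemma liminf_limsup {R : realType} {p : nat} (A : nat -> set 'rV[R]_p) :
  PK_liminf A `<=` PK_limsup A.
Proof. by move=> x [u [Au ux]]; exists id, u. Qed.

Lemma liminf_convex {R : realType} {p : nat} (A : nat -> set 'rV[R]_p) :
  (forall n, is_convex (A n)) -> is_convex (PK_liminf A).
Proof.
move=> cA x y t [u [Au ux]] [v [Av vy]] t0 t1.
exists (fun n => t *: u n + (1 - t) *: v n); split.
  by move=> n; apply: cA.
have h1 : (fun n => t *: u n) @ \oo --> t *: x by exact: cvgZl_tmp.
have h2 : (fun n => (1 - t) *: v n) @ \oo --> (1 - t) *: y by exact: cvgZl_tmp.
exact: cvgD h1 h2.
Qed.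

Lemma eventually_liminf {R : realType} {p : nat} (A : nat -> set 'rV[R]_p) w N :
  (forall n, A n !=set0) -> (forall n, (N <= n)%N -> A n w) -> PK_liminf A w.
Proof.
move=> A0 Aw.
have [g Hg] := choice (fun n => A0 n).
exists (fun n => if (N <= n)%N then w else g n); split.
  by move=> n; case: ifP => h; [apply: Aw | apply: Hg].
apply: cvg_near_cst; exists N => // n /= Nn; by rewrite Nn.
Qed.

Lemma notint {R : realType} {p : nat} (K : set 'rV[R]_p) x :
  ~ interior K x -> forall e, 0 < e -> exists w, `|x - w| < e /\ ~ K w.
Proof.
move=> nI e e0; apply: contrapT => H; apply: nI; apply/interiorE; exists e => // y xy.
apply: contrapT => nKy; apply: H; by exists y.
Qed.

Lemma boundaryE {R : realType} {p : nat} (K : set 'rV[R]_p) x :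
  closed K -> boundary K x <-> K x /\ ~ interior K x.
Proof.
move=> cK; rewrite /boundary -(proj1 (closure_id K) cK); split; by case.
Qed.

Lemma conv_comb {R : realType} {p : nat} (x y : 'rV[R]_p) t :
  (1 - t) *: x + t *: y = x + t *: (y - x).
Proof. by apply/matrixP => i j; rewrite !mxE; ring. Qed.

Lemma norm_comb {R : realType} {p : nat} (x y : 'rV[R]_p) t rho :
  0 <= t -> t <= 1 -> `|x| <= rho -> `|y| <= rho -> `|x + t *: (y - x)| <= rho.
Proof.
move=> t0 t1 hx hy; rewrite -conv_comb.
apply: le_trans (ler_normD _ _) _; rewrite !normrZ !ger0_norm ?subr_ge0 //.
have -> : rho = (1 - t) * rho + t * rho by ring.
apply: lerD; apply: ler_wpM2l => //; lra.
Qed.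

Lemma ray_limsup {R : realType} {p : nat} (E : nat -> set 'rV[R]_p) (F : set 'rV[R]_p)
    x v N0 (K : R) :
  (forall n, closed (E n)) -> 0 <= K -> `|v| = 1 ->
  (forall n, (N0 <= n)%N -> forall z, E n z -> `|z| <= K) ->
  PK_limsup (fun n => boundary (E n)) = F -> PK_limsup E x ->
  exists s, [/\ 0 <= s, s <= 2 * K + 1 & F (x + s *: v)].
Proof.
move=> cE K0 v1 bE HF Hx.
set L := 2 * K + 1.
pose f := fun s : R => x + s *: v.
have cf : continuous f.
  move=> s.
  have h1 : (fun r : R => r *: v) @ s --> s *: v by exact: cvgZr_tmp.
  exact: (cvgD (cvg_cst x) h1).
have cC : compact (f @` `[0, L]).
  apply: continuous_compact; last exact: segment_compact.
  by apply: continuous_subspaceT => s; exact: cf.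
have Hyp : forall e, 0 < e -> forall N, exists n, (N <= n)%N /\
     exists c, (f @` `[0, L]) c /\ exists2 y, boundary (E n) y & `|c - y| < e.
  move=> e e0 N.
  have [n [Nn [x' Ex' xx']]] := (limsupE E x).1 Hx e e0 (maxn N N0).
  move: Nn; rewrite geq_max => /andP [Nn N0n].
  have nE : ~ E n (x' + L *: v).
    move=> h; have := bE n N0n _ h; have := bE n N0n _ Ex'.
    have hL : `|(x' + L *: v) - x'| = L.
      by rewrite (addrC x') addrK normrZ v1 mulr1 ger0_norm // /L; lra.
    have := ler_normB (x' + L *: v) x'; rewrite hL.
    rewrite /L; lra.
  have [t [t0 t1 Eb nIb]] := segment_boundary (cE n) Ex' nE.
  exists n; split => //; exists (f (t * L)); split.
    exists (t * L) => //=; rewrite in_itv /=; apply/andP; split.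
      by rewrite mulr_ge0 // /L; lra.
    by rewrite ler_piMl // /L; lra.
  exists (x' + t *: (x' + L *: v - x')); first by apply/boundaryE.
  have -> : f (t * L) - (x' + t *: (x' + L *: v - x')) = x - x'.
    by apply/matrixP => i j; rewrite /f !mxE; ring.
  exact: xx'.
have [c [[s sL <-] Hc]] := compact_limsup cC Hyp.
rewrite HF in Hc; move: sL; rewrite /= in_itv /= => /andP [s0 sL].
by exists s.
Qed.

Lemma real_comb {R : realType} (x y t rho : R) :
  0 <= t -> t <= 1 -> `|x| <= rho -> `|y| <= rho -> `|x + t * (y - x)| <= rho.
Proof.
move=> t0 t1 hx hy.
have -> : x + t * (y - x) = (1 - t) * x + t * y by ring.
apply: le_trans (ler_normD _ _) _.
rewrite !normrM [`|1 - t|]ger0_norm ?subr_ge0 // [`|t|]ger0_norm //.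
have -> : rho = (1 - t) * rho + t * rho by ring.
apply: lerD; apply: ler_wpM2l => //; lra.
Qed.

Lemma norm_eq_entries {R : realType} {p : nat} (v : 'rV[R]_p) rho j :
  0 <= rho -> (forall k, `|v ord0 k| <= rho) -> `|v ord0 j| = rho -> `|v| = rho.
Proof.
move=> r0 hk hj; apply/eqP; rewrite eq_le norm_le_entries //=.
by rewrite -hj entry_le_norm.
Qed.

Lemma annulus_compact {R : realType} {p : nat} (r1 r2 : R) :
  compact [set b : 'rV[R]_p | r1 <= `|b| /\ `|b| <= r2].
Proof.
apply: bounded_closed_compact.
  exists r2; split; first exact: num_real.
  by move=> r hr b [_ hb] /=; apply: le_trans hb (ltW hr).
move=> b hb; split; apply/ler_addgt0Pr => e e0.
  have [b' [h1 h2] bb'] := closure_ballN hb e0.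
  have h := ler_normB b (b - b').
  have e1 : b - (b - b') = b' by rewrite opprB addrC subrK.
  rewrite e1 in h; lra.
have [b' [h1 h2] bb'] := closure_ballN hb e0.
have h := ler_normD b' (b - b').
have e1 : b' + (b - b') = b by rewrite addrC subrK.
rewrite e1 in h; lra.
Qed.

Lemma other_index {p : nat} (i : 'I_p) : (2 <= p)%N -> exists j : 'I_p, j != i.
Proof.
move=> p2.
have h0 : (0 < p)%N by apply: leq_trans p2.
have h1 : (1 < p)%N by [].
case: (eqVneq i (Ordinal h0)) => [->|ne]; last by exists (Ordinal h0); rewrite eq_sym.
by exists (Ordinal h1).
Qed.

Lemma partA {R : realType} {p : nat} (E : nat -> set 'rV[R]_p) (F : set 'rV[R]_p) :
  (2 <= p)%N -> (forall n, is_convex (E n) /\ compact (E n)) -> compact F -> F !=set0 ->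
  PK_liminf (fun n => boundary (E n)) = F -> PK_limsup (fun n => boundary (E n)) = F ->
  exists N K, 0 <= K /\ forall n, (N <= n)%N -> forall z, E n z -> `|z| <= K.
Proof.
move=> p2 HE cF [y Fy] HFi HFs.
have cE n : closed (E n) by apply: compact_closed; [exact: norm_hausdorff | exact: (HE n).2].
have [M M0 hM] := ex_strict_bound_gt0 (compact_bounded cF).
have {}hM : forall x, F x -> `|x| < M by move=> x Fx; exact: hM.
set rho := 2 * M + 3.
set Kb := 3 * M + 5.
case: (pselect (exists N, forall n, (N <= n)%N -> forall z, E n z -> `|z| <= Kb)) => [[N HN]|nb].
  by exists N, Kb; split => //; rewrite /Kb; lra.
exfalso.
have [u [Fu uy]] : PK_liminf (fun n => boundary (E n)) y by rewrite HFi.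
have q40 : 0 < 1 / 4 :> R by [].
have [N0 HN0] := eventuallyP ((cvgrPdist_lt _ _).1 uy _ q40).
set C := [set b : 'rV[R]_p | M + 1 <= `|b| /\ `|b| <= rho + M + 1].
have cC : compact C by exact: annulus_compact.
have Hyp : forall e, 0 < e -> forall N, exists n, (N <= n)%N /\
     exists c, C c /\ exists2 b, boundary (E n) b & `|c - b| < e.
  move=> e e0 N.
  have [n [z [Nn N0n Enz zK]]] : exists n z, [/\ (N <= n)%N, (N0 <= n)%N, E n z & Kb < `|z|].
    apply: contrapT => H; apply: nb; exists (maxn N N0) => n; rewrite geq_max.
    move=> /andP [h1 h2] z Ez; rewrite leNgt; apply/negP => hz; apply: H.
    by exists n, z.
  suff [b [Bb Cb]] : exists b, boundary (E n) b /\ C b.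
    by exists n; split => //; exists b; split => //; exists b => //; rewrite subrr normr0.
  have [Eun nIun] := (boundaryE _ (cE n)).1 (Fu n).
  pose eta : R := (4 * p.+1%:R)^-1.
  have eta0 : 0 < eta by rewrite /eta invr_gt0 mulr_gt0.
  have [w [uw nEw]] := notint nIun eta0.
  have wu : `|w - u n| < eta by rewrite distrC.
  have [q [d [Eq d0 Hd qu]]] := separation (HE n).1 (HE n).2 Eun nEw wu.
  have peta : p.+1%:R * eta = 1 / 4.
    have hp : p.+1%:R != 0 :> R by rewrite pnatr_eq0.
    by rewrite /eta; field.
  rewrite peta in qu.
  have yu := HN0 n N0n.
  have hq : `|q| <= M + 1 / 2.
    have -> : q = y + ((q - u n) + (u n - y)) by apply/matrixP => i j; rewrite !mxE; ring.
    apply: le_trans (ler_normD _ _) _.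
    have := ler_normD (q - u n) (u n - y).
    rewrite (distrC (u n)).
    have := hM _ Fy; lra.
  have zq : rho < `|z - q|.
    have := ler_normD (z - q) q; rewrite subrK.
    rewrite /rho /Kb in zK *; lra.
  have zq0 : 0 < `|z - q| by apply: lt_trans zq; rewrite /rho; lra.
  pose lam := rho / `|z - q|.
  have lam0 : 0 <= lam by rewrite /lam divr_ge0 // /rho; lra.
  have lam1 : lam <= 1 by rewrite /lam ler_pdivrMr // mul1r ltW.
  pose a := lam *: (z - q).
  have Ec : E n (q + a).
    have -> : q + a = lam *: z + (1 - lam) *: q.
      by apply/matrixP => i j; rewrite /a !mxE; ring.
    by apply: (HE n).1.
  have na : `|a| = rho.
    by rewrite /a normrZ ger0_norm // /lam divfK // gt_eqF.
  have a0 : a != 0 by rewrite -normr_eq0 na /rho; apply/negP => /eqP; lra.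
  have [i ai] := norm_attained a0.
  rewrite na in ai.
  have aent k : `|a ord0 k| <= rho by rewrite -na entry_le_norm.
  have [j ji] := other_index i p2.
  pose sg := sgnv d.
  have sgent k : `|sg ord0 k| = 1.
    by rewrite /sg /sgnv mxE; case: ifP => _; rewrite ?normrN normr1.
  have rho0 : 0 <= rho by rewrite /rho; lra.
  pose a' : 'rV[R]_p := \row_k (if k == i then a ord0 i else rho * sg ord0 k).
  have a'i : a' ord0 i = a ord0 i by rewrite /a' mxE eqxx.
  have a'k k : k != i -> a' ord0 k = rho * sg ord0 k.
    by move=> ki; rewrite /a' mxE (negbTE ki).
  have a'ent k : `|a' ord0 k| <= rho.
    rewrite /a' mxE; case: ifP => _ //.
    by rewrite normrM sgent mulr1 ger0_norm.
  pose o : 'rV[R]_p := rho *: sg.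
  have oent k : o ord0 k = rho * sg ord0 k by rewrite /o mxE.
  have nEo : ~ E n (q + o).
    move=> h; have := Hd _ h.
    have -> : q + o - q = o by rewrite addrC addKr.
    rewrite /o dotZr dot_sgnv.
    have := l1_gt0 d0; move=> l0.
    have : 0 < rho * l1 d by rewrite mulr_gt0 // /rho; lra.
    lra.
  have bnd : forall b, `|b - q| = rho -> C b.
    move=> b hb; split.
      have := ler_normD (b - q) q; rewrite subrK hb.
      have h2 := ler_normB b q.
      rewrite hb in h2; rewrite /rho in h2 *; lra.
    have := ler_normD (b - q) q; rewrite subrK hb; lra.
  clearbody a' o.
  case: (pselect (E n (q + a'))) => Ea'.
  - have [t [t0 t1 Eb nIb]] := segment_boundary (cE n) Ea' nEo.
    exists (q + a' + t *: (q + o - (q + a'))); split; first by apply/boundaryE.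
    apply: bnd.
    have ent k : (q + a' + t *: (q + o - (q + a')) - q) ord0 k =
        a' ord0 k + t * (o ord0 k - a' ord0 k).
      by rewrite !mxE; ring.
    apply: (norm_eq_entries (j := j)) => //.
      move=> k; rewrite ent; apply: real_comb => //.
      by rewrite oent normrM sgent mulr1 ger0_norm.
    by rewrite ent (a'k _ ji) oent subrr mulr0 addr0 normrM sgent mulr1 ger0_norm.
  - have [t [t0 t1 Eb nIb]] := segment_boundary (cE n) Ec Ea'.
    exists (q + a + t *: (q + a' - (q + a))); split; first by apply/boundaryE.
    apply: bnd.
    have ent k : (q + a + t *: (q + a' - (q + a)) - q) ord0 k =
        a ord0 k + t * (a' ord0 k - a ord0 k).
      by rewrite !mxE; ring.
    apply: (norm_eq_entries (j := i)) => //.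
      by move=> k; rewrite ent; apply: real_comb.
    by rewrite ent a'i subrr mulr0 addr0.
have [c [[Cc1 _] Hc]] := compact_limsup cC Hyp.
rewrite HFs in Hc; have := hM c Hc; lra.
Qed.

Unset Implicit Arguments.

Theorem mainTheorem9 (R : realType) (p : nat) (E : nat -> set 'rV[R]_p)
  (F : set 'rV[R]_p) :
  (2 <= p)%N ->
  (forall n, is_convex (E n) /\ compact (E n)) ->
  compact F -> F !=set0 ->
  PK_converges (fun n => boundary (E n)) F ->
  PK_converges E (conv_hull F) /\ boundary (conv_hull F) = F.
Proof.
move=> p2 HE cF F0 [HFi HFs].
have cE n : closed (E n) by apply: compact_closed; [exact: norm_hausdorff | exact: (HE n).2].
have FnE n : boundary (E n) `<=` E n by move=> x /(boundaryE _ (cE n)) [].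
have E0 n : E n !=set0.
  have [y Fy] := F0; have [u [Fu _]] : PK_liminf (fun n => boundary (E n)) y by rewrite HFi.
  by exists (u n); apply: FnE.
have [N00 [K [K0 bE]]] := partA p2 HE cF F0 HFi HFs.
have convC : conv_hull F `<=` PK_liminf E.
  move=> x cx; apply: cx; first exact: liminf_convex (fun n => (HE n).1).
  by rewrite -HFi; apply: liminf_sub.
have p0 : (0 < p)%N by apply: leq_trans p2.
have convB : PK_limsup E `<=` conv_hull F.
  move=> x Hx.
  pose e : 'rV[R]_p := const_mx 1.
  have e1 : `|e| = 1.
    apply: (norm_eq_entries (j := Ordinal p0)) => //.
      by move=> k; rewrite mxE normr1.
    by rewrite mxE normr1.
  have e1' : `|- e| = 1 by rewrite normrN.
  have [s1 [s10 _ F1]] := ray_limsup cE K0 e1 bE HFs Hx.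
  have [s2 [s20 _ F2]] := ray_limsup cE K0 e1' bE HFs Hx.
  move=> C cC FC.
  case: (eqVneq (s1 + s2) 0) => hs.
    have s1z : s1 = 0 by lra.
    rewrite s1z scale0r addr0 in F1.
    exact: FC.
  set t := s2 / (s1 + s2).
  have s0 : 0 < s1 + s2 by rewrite lt_neqAle eq_sym hs addr_ge0.
  have t0 : 0 <= t by rewrite divr_ge0 // ltW.
  have t1 : t <= 1 by rewrite ler_pdivrMr // mul1r lerDr.
  have := cC _ _ t (FC _ F1) (FC _ F2) t0 t1.
  have -> : t *: (x + s1 *: e) + (1 - t) *: (x + s2 *: - e) = x.
    apply/matrixP => i j; rewrite !mxE /t; field.
    by rewrite hs.
  by [].
have Hi : PK_liminf E = conv_hull F.
  apply/seteqP; split; last exact: convC.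
  by move=> x /liminf_limsup; exact: convB.
have Hs : PK_limsup E = conv_hull F.
  apply/seteqP; split; first exact: convB.
  by move=> x /convC /liminf_limsup.
split; first by split.
have clEc : closed (conv_hull F).
  rewrite -Hs => x hx; apply/limsupE => e e0 N.
  have e20 : 0 < e / 2 by rewrite divr_gt0.
  have [x' Hx' xx'] := closure_ballN hx e20.
  have [n [Nn [y' Ey' xy']]] := (limsupE _ _).1 Hx' _ e20 N.
  exists n; split => //; exists y' => //.
  have -> : x - y' = (x - x') + (x' - y') by rewrite addrA subrK.
  apply: le_lt_trans (ler_normD _ _) _; lra.
apply/seteqP; split => x.
  move=> /(boundaryE _ clEc) [Ecx nI].
  rewrite -HFs; apply/limsupE => e e0 N.
  have e20 : 0 < e / 2 by rewrite divr_gt0.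
  have [w [xw nEw]] := notint nI e20.
  have [v [Ev vx]] : PK_liminf E x by rewrite Hi.
  have [N1 HN1] := eventuallyP ((cvgrPdist_lt _ _).1 vx _ e20).
  have [n [Nn nEwn]] : exists n, (maxn N N1 <= n)%N /\ ~ E n w.
    apply: contrapT => H; apply: nEw; rewrite -Hi.
    apply: (@eventually_liminf _ _ _ _ (maxn N N1)) => // n hn.
    by apply: contrapT => h; apply: H; exists n.
  move: Nn; rewrite geq_max => /andP [Nn N1n].
  have [t [t0 t1 Eb nIb]] := segment_boundary (cE n) (Ev n) nEwn.
  exists n; split => //; exists (v n + t *: (w - v n)); first by apply/boundaryE.
  have -> : x - (v n + t *: (w - v n)) = (1 - t) *: (x - v n) + t *: (x - w).
    by apply/matrixP => i j; rewrite !mxE; ring.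
  apply: le_lt_trans (ler_normD _ _) _.
  rewrite !normrZ [`|1 - t|]ger0_norm ?subr_ge0 // [`|t|]ger0_norm //.
  have h1 := HN1 n N1n.
  have h2 : (1 - t) * `|x - v n| <= (1 - t) * (e / 2) by apply: ler_wpM2l; [lra | exact: ltW].
  have h3 : t * `|x - w| <= t * (e / 2) by apply: ler_wpM2l => //; exact: ltW.
  have h4 : (1 - t) * (e / 2) + t * (e / 2) = e / 2 by ring.
  lra.
move=> Fx; apply/(boundaryE _ clEc); split.
  by move=> C cC FC; exact: FC.
move=> /interiorE [r r0 Hr].
pose sv (b : {ffun 'I_p -> bool}) : 'rV[R]_p := \row_k (if b k then 1 else -1).
pose P b := x + (r / 2) *: sv b.
have LP : forall b, PK_liminf E (P b).
  move=> b; rewrite Hi; apply: Hr.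
  have -> : x - P b = - ((r / 2) *: sv b) by rewrite /P opprD addrA subrr add0r.
  rewrite normrN normrZ ger0_norm ?divr_ge0 ?ltW //.
  have : `|sv b| <= 1.
    by apply: norm_le_entries => // k; rewrite mxE; case: ifP => _; rewrite ?normrN normr1.
  move=> h; have : r / 2 * `|sv b| <= r / 2 * 1 by apply: ler_wpM2l => //; rewrite divr_ge0 ?ltW.
  lra.
have [g Hg] := choice LP.
have [u [Fu ux]] : PK_liminf (fun n => boundary (E n)) x by rewrite HFi.
pose del : R := r / (2 * p.+3%:R).
have del0 : 0 < del by rewrite /del divr_gt0 // mulr_gt0.
have H1 : \forall n \near \oo, forall b, `|P b - g b n| < del.
  apply: filter_forall => b; have [_ gb] := Hg b.
  exact: (cvgrPdist_lt _ _).1 gb _ del0.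
have [N2 HN2] := eventuallyP ((cvgrPdist_lt _ _).1 ux _ del0).
have [N1 HN1] := eventuallyP H1.
set n := maxn N1 N2.
have Hgn := HN1 n (leq_maxl _ _).
have xu := HN2 n (leq_maxr _ _).
have [Eun nIun] := (boundaryE _ (cE n)).1 (Fu n).
have [w [uw nEw]] := notint nIun del0.
have wu : `|w - u n| < del by rewrite distrC.
have [q [d [Eq d0 Hd qu]]] := separation (HE n).1 (HE n).2 Eun nEw wu.
pose b : {ffun 'I_p -> bool} := [ffun k => 0 <= d ord0 k].
have svb : sv b = sgnv d by apply/matrixP => i k; rewrite !mxE ffunE.
have gbn := (Hg b).1 n.
have := Hd _ gbn.
have -> : g b n - q = (x - q) + (r / 2) *: sgnv d - (P b - g b n).
  by rewrite /P svb; apply/matrixP => i k; rewrite !mxE; ring.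
rewrite dotBr dotDr dotZr dot_sgnv.
have h1 := dot_le d (q - x).
have ex : dot d (x - q) = - dot d (q - x) by rewrite -dotNr opprB.
rewrite ex.
have h2 := dot_le d (P b - g b n).
have l0 := l1_gt0 d0.
have h3 : l1 d * `|P b - g b n| <= l1 d * del by apply: ler_wpM2l; [exact: ltW | exact: ltW].
have hxq : `|q - x| < p.+2%:R * del.
  have -> : q - x = (q - u n) + (u n - x) by rewrite addrA subrK.
  apply: le_lt_trans (ler_normD _ _) _.
  rewrite distrC in xu.
  have -> : p.+2%:R * del = p.+1%:R * del + del by rewrite -natr1 mulrDl mul1r.
  exact: ltrD.
have h4 : l1 d * `|q - x| <= l1 d * (p.+2%:R * del) by apply: ler_wpM2l; [exact: ltW | exact: ltW].
have hd : p.+2%:R * del + del = r / 2.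
  have hp : p.+3%:R != 0 :> R by rewrite pnatr_eq0.
  rewrite /del -[p.+2%:R]natr1 -[p.+3%:R]natr1 -[p.+2%:R]natr1 in hp *.
  field. by rewrite -!natr1 in hp.
have h5 : l1 d * (p.+2%:R * del) + l1 d * del = l1 d * (r / 2) by rewrite -mulrDr hd.
have h6 : r / 2 * l1 d = l1 d * (r / 2) by rewrite mulrC.
move=> h7.
have : l1 d * (r / 2) <= l1 d * `|q - x| + l1 d * `|P b - g b n| by lra.
have h8 : l1 d * `|q - x| < l1 d * (p.+2%:R * del) by rewrite ltr_pM2l.
lra.
Qed.
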